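(* Consider the real system, for unknown real functions $u,v,w$ of $(x,y,z)$ and a given real function $q(x,y,z)$: $$-(u_x+v_y+w_z)+u^2+v^2+w^2-q=0,\quad w_y-v_z=0,\quad u_z-w_x=0,\quad v_x-u_y=0.$$ A vector field $\hat v=\xi\partial_x+\eta\partial_y+\tau\partial_z+\phi\partial_u+\psi\partial_v+\zeta\partial_w$, with coefficients depending on $(x,y,z,u,v,w)$, is the infinitesimal generator of a group of Lie point symmetries of this system if and only if there are real constants $a_1,\dots,a_{10}$ such that $\xi=a_1(x^2-y^2-z^2)+2a_2xy+2a_3xz-a_4z+a_5x-a_6y+a_9$, $\eta=2a_1xy+a_2(y^2-x^2-z^2)+2a_3yz+a_5y+a_6x-a_7z+a_{10}$, $\tau=2a_1xz+2a_2yz+a_3(z^2-x^2-y^2)+a_4x+a_5z+a_7y+a_8$, $\phi=a_1(1-2(xu+yv+zw))+2a_2(xv-yu)+2a_3(xw-zu)-a_4w-a_5u-a_6v$, $\psi=2a_1(yu-xv)+a_2(1-2(xu+yv+zw))-2a_3(zv-yw)-a_5v+a_6u-a_7w$, $\zeta=2a_1(zu-xw)+2a_2(zv-yw)+a_3(1-2(xu+yv+zw))+a_4u-a_5w+a_7v$, and the potential $q$ satisfies $$[a_1(y^2+z^2-x^2)-2a_2xy-2a_3xz+a_4z-a_5x+a_6y-a_9]q_x+[-2a_1xy+a_2(x^2+z^2-y^2)-2a_3yz-a_5y-a_6x+a_7z-a_{10}]q_y$$ $$+[-2a_1xz-2a_2yz+a_3(x^2+y^2-z^2)-a_4x-a_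5z-a_7y-a_8]q_z-2[a_5+2(a_1x+a_2y+a_3z)]q=0.$$
   Context: This system is the componentwise form of the three-dimensional Riccati equation $D\mathbf Q+|\mathbf Q|^2=q$ for $\mathbf Q=ue_1+ve_2+we_3$ real-valued (equivalently $-\mathrm{div}\,\mathbf Q+|\mathbf Q|^2=q$, $\mathrm{rot}\,\mathbf Q=0$). A Lie point symmetry group is a local group of transformations of $(x,y,z,u,v,w)$ mapping solutions of the system to solutions; its generator is determined by the standard infinitesimal criterion that the first prolongation of $\hat v$ annihilates each equation on the solution set. *)

(* Defs.v *)
From Stdlib Require Import Reals Lra List ClassicalEpsilon.
Open Scope R_scope.

(* Derivative of a one-variable function at a point (the value l with
   derivable_pt_lim f a l when it exists; an arbitrary value otherwise). *)
Definition pder (f : R -> R) (a : R) : R :=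
  epsilon (inhabits 0) (fun l => derivable_pt_lim f a l).

(* Points of R^n are encoded as nat -> R (only coordinates < n matter). *)
Definition upd (p : nat -> R) (i : nat) (t : R) : nat -> R :=
  fun j => if Nat.eqb j i then t else p j.

Definition pd (i : nat) (f : (nat -> R) -> R) : (nat -> R) -> R :=
  fun p => pder (fun t => f (upd p i t)) (p i).

Fixpoint iter_pd (l : list nat) (f : (nat -> R) -> R) : (nat -> R) -> R :=
  match l with nil => f | i :: l' => pd i (iter_pd l' f) end.

Definition cont_n (n : nat) (f : (nat -> R) -> R) : Prop :=
  forall p eps, 0 < eps -> exists delta, 0 < delta /\
    forall p', (forall j, (j < n)%nat -> Rabs (p' j - p j) < delta) ->
      Rabs (f p' - f p) < eps.

Definition smooth_n (n : nat) (f : (nat -> R) -> R) : Prop :=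
  forall l : list nat, (forall i, In i l -> (i < n)%nat) ->
    cont_n n (iter_pd l f) /\
    (forall i, (i < n)%nat -> forall p,
       derivable_pt_lim (fun t => iter_pd l f (upd p i t)) (p i)
                        (pd i (iter_pd l f) p)).

Definition F3 := R -> R -> R -> R.
Definition F6 := R -> R -> R -> R -> R -> R -> R.

Definition pt3 (x y z : R) : nat -> R :=
  fun j => match j with O => x | S O => y | S (S O) => z | _ => 0 end.
Definition pt6 (x y z u v w : R) : nat -> R :=
  fun j => match j with O => x | S O => y | S (S O) => z
    | S (S (S O)) => u | S (S (S (S O))) => v | S (S (S (S (S O)))) => w
    | _ => 0 end.
Definition unc3 (F : F3) : (nat -> R) -> R :=
  fun p => F (p 0%nat) (p 1%nat) (p 2%nat).
Definition unc6 (F : F6) : (nat -> R) -> R :=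
  fun p => F (p 0%nat) (p 1%nat) (p 2%nat) (p 3%nat) (p 4%nat) (p 5%nat).

Definition smooth3 (F : F3) : Prop := smooth_n 3 (unc3 F).
Definition smooth6 (F : F6) : Prop := smooth_n 6 (unc6 F).

(* partial derivatives: D3 0/1/2 = d/dx, d/dy, d/dz;
   D6 0..5 = d/dx, d/dy, d/dz, d/du, d/dv, d/dw *)
Definition D3 (i : nat) (F : F3) : F3 :=
  fun x y z => pd i (unc3 F) (pt3 x y z).
Definition D6 (i : nat) (F : F6) : F6 :=
  fun x y z u v w => pd i (unc6 F) (pt6 x y z u v w).

Definition sel3 {A : Type} (a b c : A) (k : nat) : A :=
  match k with O => a | S O => b | _ => c end.

(* First-order jet coordinates: J k i = derivative of the k-th dependent
   variable (0 = u, 1 = v, 2 = w) w.r.t. the i-th independent variable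
   (0 = x, 1 = y, 2 = z). *)

Definition TD (i : nat) (F : F6) (x y z u v w : R) (J : nat -> nat -> R) : R :=
  D6 i F x y z u v w
  + J 0%nat i * D6 3 F x y z u v w
  + J 1%nat i * D6 4 F x y z u v w
  + J 2%nat i * D6 5 F x y z u v w.

(* Coefficient of d/d(U^k_i) in the first prolongation of
   xi d_x + eta d_y + tau d_z + phi d_u + psi d_v + zeta d_w :
   Phi^k_i = D_i Phi^k - sum_j U^k_j D_i xi^j. *)
Definition prol1 (xi eta tau phi psi zeta : F6) (k i : nat)
    (x y z u v w : R) (J : nat -> nat -> R) : R :=
  TD i (sel3 phi psi zeta k) x y z u v w J
  - (J k 0%nat * TD i xi x y z u v w J
     + J k 1%nat * TD i eta x y z u v w J
     + J k 2%nat * TD i tau x y z u v w J).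

Definition Eq1 (q : F3) (x y z u v w : R) (J : nat -> nat -> R) : R :=
  - (J 0%nat 0%nat + J 1%nat 1%nat + J 2%nat 2%nat)
  + u ^ 2 + v ^ 2 + w ^ 2 - q x y z.
Definition Eq2 (J : nat -> nat -> R) : R := J 2%nat 1%nat - J 1%nat 2%nat.
Definition Eq3 (J : nat -> nat -> R) : R := J 0%nat 2%nat - J 2%nat 0%nat.
Definition Eq4 (J : nat -> nat -> R) : R := J 1%nat 0%nat - J 0%nat 1%nat.

(* Infinitesimal criterion: pr^(1) v annihilates each equation on the
   solution set (in first-order jet space) of the system. *)
Definition is_symmetry_generator (q : F3) (xi eta tau phi psi zeta : F6) : Prop :=
  forall (x y z u v w : R) (J : nat -> nat -> R),
    Eq1 q x y z u v w J = 0 -> Eq2 J = 0 -> Eq3 J = 0 -> Eq4 J = 0 ->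
    let P := fun k i => prol1 xi eta tau phi psi zeta k i x y z u v w J in
    (- (xi x y z u v w * D3 0 q x y z + eta x y z u v w * D3 1 q x y z
        + tau x y z u v w * D3 2 q x y z)
     + 2 * u * phi x y z u v w + 2 * v * psi x y z u v w
     + 2 * w * zeta x y z u v w
     - (P 0%nat 0%nat + P 1%nat 1%nat + P 2%nat 2%nat) = 0)
    /\ P 2%nat 1%nat - P 1%nat 2%nat = 0
    /\ P 0%nat 2%nat - P 2%nat 0%nat = 0
    /\ P 1%nat 0%nat - P 0%nat 1%nat = 0.

(* Main.v *)
Require Import Defs.
From Stdlib Require Import Reals Lra Lia List FunctionalExtensionality ClassicalEpsilon.
From Coquelicot Require Import Coquelicot.
Open Scope R_scope.

Lemma pder_eq f a l : derivable_pt_lim f a l -> pder f a = l.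
Proof.
  intro H. unfold pder.
  pose proof (epsilon_spec (inhabits 0) (fun l => derivable_pt_lim f a l) (ex_intro _ l H)) as H2.
  exact (uniqueness_limite _ _ _ _ H2 H).
Qed.

Lemma upd_same p i t : upd p i t i = t.
Proof. unfold upd. now rewrite Nat.eqb_refl. Qed.
Lemma upd_other p i j t : j <> i -> upd p i t j = p j.
Proof. intro H. unfold upd. apply Nat.eqb_neq in H. now rewrite H. Qed.
Lemma upd_upd p i s t : upd (upd p i s) i t = upd p i t.
Proof. apply functional_extensionality; intro j. unfold upd. now destruct (Nat.eqb j i). Qed.
Lemma upd_id p i : upd p i (p i) = p.
Proof. apply functional_extensionality; intro j. unfold upd.
  destruct (Nat.eqb j i) eqn:E; auto. apply Nat.eqb_eq in E. now subst. Qed.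
Lemma upd_comm p i j s t : i <> j -> upd (upd p i s) j t = upd (upd p j t) i s.
Proof. intro H. apply functional_extensionality; intro k. unfold upd.
  destruct (Nat.eqb k j) eqn:E1; destruct (Nat.eqb k i) eqn:E2; auto.
  apply Nat.eqb_eq in E1; apply Nat.eqb_eq in E2. subst. now contradiction H. Qed.

Lemma iter_app l i f : iter_pd l (pd i f) = iter_pd (l ++ i :: nil) f.
Proof. induction l; simpl; auto. now rewrite IHl. Qed.

Lemma smooth_pd n f i : smooth_n n f -> (i < n)%nat -> smooth_n n (pd i f).
Proof.
  intros H Hi l Hl. rewrite iter_app. apply H.
  intros j Hj. apply in_app_or in Hj. destruct Hj as [Hj|Hj]; auto.
  destruct Hj as [Hj|[]]. now subst.
Qed.

Lemma sm_der n f i p : smooth_n n f -> (i < n)%nat ->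
  derivable_pt_lim (fun t => f (upd p i t)) (p i) (pd i f p).
Proof. intros H Hi. destruct (H nil) as [_ H2]. simpl; intros; contradiction. now apply H2. Qed.

Lemma sm_der_at n f i p t0 : smooth_n n f -> (i < n)%nat ->
  derivable_pt_lim (fun t => f (upd p i t)) t0 (pd i f (upd p i t0)).
Proof. intros H Hi. pose proof (sm_der n f i (upd p i t0) H Hi) as D.
  rewrite upd_same in D. replace (fun t => f (upd p i t)) with (fun t => f (upd (upd p i t0) i t)).
  exact D. apply functional_extensionality; intro t. now rewrite upd_upd. Qed.

Lemma sm_cont n f : smooth_n n f -> cont_n n f.
Proof. intros H. destruct (H nil) as [H2 _]. simpl; intros; contradiction. exact H2. Qed.

Lemma sm_cont2 n f i j : smooth_n n f -> (i < n)%nat -> (j < n)%nat -> cont_n n (pd i (pd j f)).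
Proof. intros H Hi Hj. destruct (H (i :: j :: nil)) as [H2 _].
  simpl; intros k [Hk|[Hk|[]]]; subst; auto. exact H2. Qed.

Lemma is_der_pd f i p l : derivable_pt_lim (fun t => f (upd p i t)) (p i) l -> pd i f p = l.
Proof. intro H. unfold pd. now apply pder_eq. Qed.

Lemma cont2d n F p i j : cont_n n F -> (i < n)%nat -> (j < n)%nat -> i <> j ->
  continuity_2d_pt (fun s t => F (upd (upd p i s) j t)) (p i) (p j).
Proof.
  intros HC Hi Hj Hij eps.
  destruct (HC p eps (cond_pos eps)) as [d [Hd Hd2]].
  exists (mkposreal d Hd). intros s t Hs Ht. simpl in Hs, Ht.
  replace (F (upd (upd p i (p i)) j (p j))) with (F p).
  2:{ now rewrite !upd_id. }
  apply Hd2. intros k Hk. unfold upd.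
  destruct (Nat.eqb k j) eqn:E1. apply Nat.eqb_eq in E1; subst; auto.
  destruct (Nat.eqb k i) eqn:E2. apply Nat.eqb_eq in E2; subst; auto.
  rewrite Rminus_eq_0, Rabs_R0; auto.
Qed.

Lemma clairaut n f i j p : smooth_n n f -> (i < n)%nat -> (j < n)%nat ->
  pd i (pd j f) p = pd j (pd i f) p.
Proof.
  intros H Hi Hj. destruct (Nat.eq_dec i j) as [->|Hij]; auto.
  set (g := fun s t => f (upd (upd p i s) j t)).
  assert (E1 : forall z v, Derive (fun t => g z t) v = pd j f (upd (upd p i z) j v)).
  { intros z v. apply is_derive_unique. apply is_derive_Reals. unfold g.
    apply (sm_der_at n f j (upd p i z) v H Hj). }
  assert (E2 : forall z u, Derive (fun t => g t z) u = pd i f (upd (upd p i u) j z)).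
  { intros z u. apply is_derive_unique. apply is_derive_Reals. unfold g.
    replace (fun t => f (upd (upd p i t) j z)) with (fun t => f (upd (upd p j z) i t)).
    2:{ apply functional_extensionality; intro t. now rewrite upd_comm. }
    rewrite upd_comm by auto. apply (sm_der_at n f i (upd p j z) u H Hi). }
  assert (Hsm_j := smooth_pd n f j H Hj). assert (Hsm_i := smooth_pd n f i H Hi).
  assert (E3 : forall u v, Derive (fun z => Derive (fun t => g z t) v) u = pd i (pd j f) (upd (upd p i u) j v)).
  { intros u v. apply is_derive_unique. apply is_derive_Reals.
    replace (fun z => Derive (fun t => g z t) v) with (fun z => pd j f (upd (upd (upd p j v) i u) i z)).
    2:{ apply functional_extensionality; intro z. rewrite E1. f_equal.
        rewrite upd_upd. rewrite upd_comm by auto. reflexivity. }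
    replace (upd (upd p i u) j v) with (upd (upd p j v) i u) by (rewrite upd_comm; auto).
    pose proof (sm_der n (pd j f) i (upd (upd p j v) i u) Hsm_j Hi) as D.
    rewrite upd_same in D. exact D. }
  assert (E4 : forall u v, Derive (fun z => Derive (fun t => g t z) u) v = pd j (pd i f) (upd (upd p i u) j v)).
  { intros u v. apply is_derive_unique. apply is_derive_Reals.
    replace (fun z => Derive (fun t => g t z) u) with (fun z => pd i f (upd (upd (upd p i u) j v) j z)).
    2:{ apply functional_extensionality; intro z. rewrite E2. f_equal. now rewrite upd_upd. }
    pose proof (sm_der n (pd i f) j (upd (upd p i u) j v) Hsm_i Hj) as D.
    rewrite upd_same in D. exact D. }
  pose proof (Schwarz g (p i) (p j)) as S.
  rewrite E3, E4 in S. rewrite !upd_id in S. apply S.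
  - exists (mkposreal 1 Rlt_0_1). intros u v _ _. repeat split.
    + eexists. apply is_derive_Reals. unfold g.
      replace (fun z => f (upd (upd p i z) j v)) with (fun z => f (upd (upd p j v) i z)).
      2:{ apply functional_extensionality; intro t. now rewrite upd_comm. }
      apply (sm_der_at n f i (upd p j v) u H Hi).
    + eexists. apply is_derive_Reals. unfold g. apply (sm_der_at n f j (upd p i u) v H Hj).
    + eexists. apply is_derive_Reals.
      replace (fun z => Derive (fun t => g z t) v) with (fun z => pd j f (upd (upd p j v) i z)).
      2:{ apply functional_extensionality; intro z. rewrite E1. f_equal. rewrite upd_comm; auto. }
      apply (sm_der_at n (pd j f) i (upd p j v) u Hsm_j Hi).
    + eexists. apply is_derive_Reals.
      replace (fun z => Derive (fun t => g t z) u) with (fun z => pd i f (upd (upd p i u) j z)).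
      2:{ apply functional_extensionality; intro z. now rewrite E2. }
      apply (sm_der_at n (pd i f) j (upd p i u) v Hsm_i Hj).
  - replace (fun u v => Derive (fun z => Derive (fun t => g z t) v) u) with
        (fun u v => pd i (pd j f) (upd (upd p i u) j v)).
    2:{ do 2 (apply functional_extensionality; intro). now rewrite E3. }
    apply (cont2d n); auto. apply sm_cont2; auto.
  - replace (fun u v => Derive (fun z => Derive (fun t => g t z) u) v) with
        (fun u v => pd j (pd i f) (upd (upd p i u) j v)).
    2:{ do 2 (apply functional_extensionality; intro). now rewrite E4. }
    apply (cont2d n); auto. apply sm_cont2; auto.
Qed.


Lemma const_dir h : (forall t, derivable_pt_lim h t 0) -> forall a b, h a = h b.
Proof.
  intros H a b. destruct (Rtotal_order a b) as [Hab|[Hab|Hab]].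
  - destruct (MVT_cor2 h (fun _ => 0) a b Hab (fun c _ => H c)) as [c [Hc _]]. lra.
  - now subst.
  - destruct (MVT_cor2 h (fun _ => 0) b a Hab (fun c _ => H c)) as [c [Hc _]]. lra.
Qed.

Lemma upd_pt6 k x y z u v w t : (k < 6)%nat -> exists x' y' z' u' v' w',
  upd (pt6 x y z u v w) k t = pt6 x' y' z' u' v' w'.
Proof.
  intro Hk. destruct k as [|[|[|[|[|[|k]]]]]]; try lia;
  [exists t, y, z, u, v, w|exists x, t, z, u, v, w|exists x, y, t, u, v, w
  |exists x, y, z, t, v, w|exists x, y, z, u, t, w|exists x, y, z, u, v, t];
  apply functional_extensionality; intros [|[|[|[|[|[|j]]]]]]; reflexivity.
Qed.

Ltac ext6 := apply functional_extensionality; intros [|[|[|[|[|[|?]]]]]]; reflexivity.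
Lemma upd6_0 x y z u v w t : upd (pt6 x y z u v w) 0 t = pt6 t y z u v w. Proof. ext6. Qed.
Lemma upd6_1 x y z u v w t : upd (pt6 x y z u v w) 1 t = pt6 x t z u v w. Proof. ext6. Qed.
Lemma upd6_2 x y z u v w t : upd (pt6 x y z u v w) 2 t = pt6 x y t u v w. Proof. ext6. Qed.
Lemma upd6_3 x y z u v w t : upd (pt6 x y z u v w) 3 t = pt6 x y z t v w. Proof. ext6. Qed.
Lemma upd6_4 x y z u v w t : upd (pt6 x y z u v w) 4 t = pt6 x y z u t w. Proof. ext6. Qed.
Lemma upd6_5 x y z u v w t : upd (pt6 x y z u v w) 5 t = pt6 x y z u v t. Proof. ext6. Qed.

Definition Dzero (F : (nat -> R) -> R) (k : nat) : Prop :=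
  forall x y z u v w, derivable_pt_lim (fun t => F (upd (pt6 x y z u v w) k t)) (pt6 x y z u v w k) 0.

Lemma dir_const F k : (k < 6)%nat -> Dzero F k ->
  forall x y z u v w t, F (upd (pt6 x y z u v w) k t) = F (pt6 x y z u v w).
Proof.
  intros Hk H x y z u v w t.
  set (P := pt6 x y z u v w).
  assert (D : forall t0, derivable_pt_lim (fun t => F (upd P k t)) t0 0).
  { intro t0. destruct (upd_pt6 k x y z u v w t0 Hk) as (x'&y'&z'&u'&v'&w'&E).
    pose proof (H x' y' z' u' v' w') as D. rewrite <- E in D.
    rewrite upd_same in D. replace (fun t => F (upd P k t)) with (fun t => F (upd (upd P k t0) k t)).
    exact D. apply functional_extensionality; intro. now rewrite upd_upd. }
  rewrite (const_dir _ D t (P k)). now rewrite upd_id.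
Qed.

Lemma ZG F : (forall k, (k < 6)%nat -> Dzero F k) ->
  forall x y z u v w, F (pt6 x y z u v w) = F (pt6 0 0 0 0 0 0).
Proof.
  intros H x y z u v w.
  rewrite <- (dir_const F 0 ltac:(lia) (H 0%nat ltac:(lia)) x y z u v w 0), upd6_0.
  rewrite <- (dir_const F 1 ltac:(lia) (H 1%nat ltac:(lia)) 0 y z u v w 0), upd6_1.
  rewrite <- (dir_const F 2 ltac:(lia) (H 2%nat ltac:(lia)) 0 0 z u v w 0), upd6_2.
  rewrite <- (dir_const F 3 ltac:(lia) (H 3%nat ltac:(lia)) 0 0 0 u v w 0), upd6_3.
  rewrite <- (dir_const F 4 ltac:(lia) (H 4%nat ltac:(lia)) 0 0 0 0 v w 0), upd6_4.
  rewrite <- (dir_const F 5 ltac:(lia) (H 5%nat ltac:(lia)) 0 0 0 0 0 w 0), upd6_5.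
  reflexivity.
Qed.

Lemma ZGu F : Dzero F 3 -> Dzero F 4 -> Dzero F 5 ->
  forall x y z u v w, F (pt6 x y z u v w) = F (pt6 x y z 0 0 0).
Proof.
  intros H3 H4 H5 x y z u v w.
  rewrite <- (dir_const F 3 ltac:(lia) H3 x y z u v w 0), upd6_3.
  rewrite <- (dir_const F 4 ltac:(lia) H4 x y z 0 v w 0), upd6_4.
  rewrite <- (dir_const F 5 ltac:(lia) H5 x y z 0 0 w 0), upd6_5.
  reflexivity.
Qed.

Lemma congr6 f g : (forall x y z u v w, f (pt6 x y z u v w) = g (pt6 x y z u v w)) ->
  forall k, (k < 6)%nat -> forall x y z u v w, pd k f (pt6 x y z u v w) = pd k g (pt6 x y z u v w).
Proof.
  intros H k Hk x y z u v w. unfold pd. f_equal. apply functional_extensionality; intro t.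
  destruct (upd_pt6 k x y z u v w t Hk) as (x'&y'&z'&u'&v'&w'&E). rewrite E. apply H.
Qed.

Lemma pdu_indep F : (forall x y z u v w, F (pt6 x y z u v w) = F (pt6 x y z 0 0 0)) ->
  forall j, (j < 3)%nat -> forall x y z u v w, pd j F (pt6 x y z u v w) = pd j F (pt6 x y z 0 0 0).
Proof.
  intros H j Hj x y z u v w. unfold pd.
  destruct j as [|[|[|j]]]; try lia; simpl pt6 at 2 4; f_equal; apply functional_extensionality; intro t.
  - rewrite !upd6_0. rewrite H. symmetry. apply H.
  - rewrite !upd6_1. rewrite H. symmetry. apply H.
  - rewrite !upd6_2. rewrite H. symmetry. apply H.
Qed.

Lemma pd_const k c p : pd k (fun _ => c) p = 0.
Proof. apply is_der_pd. apply derivable_pt_lim_const. Qed.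

Lemma dl_plus f g x a b l : derivable_pt_lim f x a -> derivable_pt_lim g x b -> l = a + b ->
  derivable_pt_lim (fun t => f t + g t) x l.
Proof. intros. subst. now apply derivable_pt_lim_plus. Qed.
Lemma dl_minus f g x a b l : derivable_pt_lim f x a -> derivable_pt_lim g x b -> l = a - b ->
  derivable_pt_lim (fun t => f t - g t) x l.
Proof. intros. subst. now apply derivable_pt_lim_minus. Qed.
Lemma dl_opp f x a l : derivable_pt_lim f x a -> l = - a ->
  derivable_pt_lim (fun t => - f t) x l.
Proof. intros. subst. now apply derivable_pt_lim_opp. Qed.
Lemma dl_mult f g x a b l : derivable_pt_lim f x a -> derivable_pt_lim g x b -> l = a * g x + f x * b ->
  derivable_pt_lim (fun t => f t * g t) x l.
Proof. intros. subst.
  pose proof (derivable_pt_lim_mult f g x a b H H0). unfold mult_fct in H1. exact H1. Qed.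
Lemma dl_coord p k j x : derivable_pt_lim (fun t => upd p k t j) x (if Nat.eqb j k then 1 else 0).
Proof. unfold upd. destruct (Nat.eqb j k). apply derivable_pt_lim_id. apply derivable_pt_lim_const. Qed.
Lemma dl_const c x : derivable_pt_lim (fun _ => c) x 0.
Proof. apply derivable_pt_lim_const. Qed.


Definition mkJ (s k11 k22 k01 k02 k12 : R) : nat -> nat -> R := fun a b =>
  match a, b with
  | O, O => s - k11 - k22 | S O, S O => k11 | S (S O), S (S O) => k22
  | O, S O => k01 | S O, O => k01 | O, S (S O) => k02 | S (S O), O => k02
  | _, _ => k12 end.

Section Alg.
Variables (q : F3) (xi eta tau phi psi zeta : F6).
Hypothesis H : is_symmetry_generator q xi eta tau phi psi zeta.
Variables (x y z u v w : R).

Ltac inst a b c d e :=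
  let HH := fresh "I" in
  pose proof (H x y z u v w (mkJ (u^2+v^2+w^2 - q x y z) a b c d e)
    ltac:(unfold Eq1, mkJ; ring) ltac:(unfold Eq2, mkJ; ring)
    ltac:(unfold Eq3, mkJ; ring) ltac:(unfold Eq4, mkJ; ring)) as HH;
  cbv beta iota zeta delta [prol1 TD sel3 mkJ] in HH;
  let a1 := fresh "e" in let a2 := fresh "e" in let a3 := fresh "e" in let a4 := fresh "e" in
  destruct HH as [a1 [a2 [a3 a4]]].

Lemma alg_B :
  D6 3 xi x y z u v w = 0 /\ D6 4 xi x y z u v w = 0 /\ D6 5 xi x y z u v w = 0 /\
  D6 3 eta x y z u v w = 0 /\ D6 4 eta x y z u v w = 0 /\ D6 5 eta x y z u v w = 0 /\
  D6 3 tau x y z u v w = 0 /\ D6 4 tau x y z u v w = 0 /\ D6 5 tau x y z u v w = 0.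
Proof.
  inst 0 0 0 0 0.
  inst (-1) 0 0 0 0. inst 1 0 0 0 0.
  inst 0 (-1) 0 0 0. inst 0 1 0 0 0.
  inst 1 (-1) 0 0 0. inst (-1) 1 0 0 0.
  inst 0 0 1 1 0. inst 0 0 (-1) (-1) 0.
  inst 0 0 1 0 1. inst 0 0 (-1) 0 (-1).
  inst 0 0 0 1 1. inst 0 0 0 (-1) (-1).
  repeat split; lra.
Qed.

Ltac inst2 a b c d e :=
  let HH := fresh "I" in
  pose proof (H x y z u v w (mkJ (u^2+v^2+w^2 - q x y z) a b c d e)
    ltac:(unfold Eq1, mkJ; ring) ltac:(unfold Eq2, mkJ; ring)
    ltac:(unfold Eq3, mkJ; ring) ltac:(unfold Eq4, mkJ; ring)) as HH;
  cbv beta iota zeta delta [prol1 TD sel3 mkJ] in HH;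
  destruct alg_B as (b1&b2&b3&b4&b5&b6&b7&b8&b9);
  rewrite b1, b2, b3, b4, b5, b6, b7, b8, b9 in HH; clear b1 b2 b3 b4 b5 b6 b7 b8 b9;
  let a1 := fresh "e" in let a2 := fresh "e" in let a3 := fresh "e" in let a4 := fresh "e" in
  destruct HH as [a1 [a2 [a3 a4]]].

Lemma alg_L :
  D6 1 xi x y z u v w + D6 0 eta x y z u v w = 0 /\
  D6 2 xi x y z u v w + D6 0 tau x y z u v w = 0 /\
  D6 2 eta x y z u v w + D6 1 tau x y z u v w = 0 /\
  D6 0 xi x y z u v w = D6 1 eta x y z u v w /\
  D6 0 xi x y z u v w = D6 2 tau x y z u v w /\
  D6 4 phi x y z u v w = - D6 0 eta x y z u v w /\
  D6 5 phi x y z u v w = - D6 0 tau x y z u v w /\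
  D6 3 psi x y z u v w = - D6 1 xi x y z u v w /\
  D6 5 psi x y z u v w = - D6 1 tau x y z u v w /\
  D6 3 zeta x y z u v w = - D6 2 xi x y z u v w /\
  D6 4 zeta x y z u v w = - D6 2 eta x y z u v w /\
  D6 3 phi x y z u v w + D6 0 xi x y z u v w = D6 4 psi x y z u v w + D6 1 eta x y z u v w /\
  D6 3 phi x y z u v w + D6 0 xi x y z u v w = D6 5 zeta x y z u v w + D6 2 tau x y z u v w.
Proof.
  inst2 0 0 0 0 0.
  inst2 (-1) 0 0 0 0. inst2 1 0 0 0 0.
  inst2 0 (-1) 0 0 0. inst2 0 1 0 0 0.
  inst2 1 (-1) 0 0 0. inst2 (-1) 1 0 0 0.
  inst2 1 (-2) 0 0 0. inst2 (-1) 2 0 0 0.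
  inst2 (-2) 1 0 0 0. inst2 2 (-1) 0 0 0.
  inst2 1 1 0 0 0. inst2 (-1) (-1) 0 0 0.
  inst2 0 0 1 0 0. inst2 0 0 (-1) 0 0.
  inst2 0 0 0 1 0. inst2 0 0 0 (-1) 0.
  inst2 0 0 0 0 1. inst2 0 0 0 0 (-1).
  repeat split; lra.
Qed.

Lemma alg_F5 :
  - (xi x y z u v w * D3 0 q x y z + eta x y z u v w * D3 1 q x y z
     + tau x y z u v w * D3 2 q x y z)
  + 2 * u * phi x y z u v w + 2 * v * psi x y z u v w + 2 * w * zeta x y z u v w
  - (D6 0 phi x y z u v w + D6 1 psi x y z u v w + D6 2 zeta x y z u v w)
  - (u^2+v^2+w^2 - q x y z) * (D6 3 phi x y z u v w - D6 0 xi x y z u v w) = 0.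
Proof. inst2 0 0 0 0 0. lra. Qed.
End Alg.


Lemma D6_der k F x y z u v w l :
  derivable_pt_lim (fun t => unc6 F (upd (pt6 x y z u v w) k t)) (pt6 x y z u v w k) l ->
  D6 k F x y z u v w = l.
Proof. intro Hd. unfold D6. now apply is_der_pd. Qed.

Ltac compD :=
  match goal with |- context [D6 ?k ?F ?x ?y ?z ?u ?v ?w] =>
    erewrite (D6_der k F x y z u v w) by
      (cbv beta iota delta [unc6 upd pt6 Nat.eqb]; apply is_derive_Reals; auto_derive; [exact I|reflexivity])
  end.

Lemma backward (q : F3) (xi eta tau phi psi zeta : F6) (a1 a2 a3 a4 a5 a6 a7 a8 a9 a10 : R) :
    (forall x y z u v w : R,
      xi x y z u v w = a1 * (x ^ 2 - y ^ 2 - z ^ 2) + 2 * a2 * x * y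
                       + 2 * a3 * x * z - a4 * z + a5 * x - a6 * y + a9
      /\ eta x y z u v w = 2 * a1 * x * y + a2 * (y ^ 2 - x ^ 2 - z ^ 2)
                       + 2 * a3 * y * z + a5 * y + a6 * x - a7 * z + a10
      /\ tau x y z u v w = 2 * a1 * x * z + 2 * a2 * y * z
                       + a3 * (z ^ 2 - x ^ 2 - y ^ 2) + a4 * x + a5 * z
                       + a7 * y + a8
      /\ phi x y z u v w = a1 * (1 - 2 * (x * u + y * v + z * w))
                       + 2 * a2 * (x * v - y * u) + 2 * a3 * (x * w - z * u)
                       - a4 * w - a5 * u - a6 * v
      /\ psi x y z u v w = 2 * a1 * (y * u - x * v)
                       + a2 * (1 - 2 * (x * u + y * v + z * w))
                       - 2 * a3 * (z * v - y * w) - a5 * v + a6 * u - a7 * w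
      /\ zeta x y z u v w = 2 * a1 * (z * u - x * w) + 2 * a2 * (z * v - y * w)
                       + a3 * (1 - 2 * (x * u + y * v + z * w))
                       + a4 * u - a5 * w + a7 * v) ->
    (forall x y z : R,
      (a1 * (y ^ 2 + z ^ 2 - x ^ 2) - 2 * a2 * x * y - 2 * a3 * x * z
         + a4 * z - a5 * x + a6 * y - a9) * D3 0 q x y z
      + (- 2 * a1 * x * y + a2 * (x ^ 2 + z ^ 2 - y ^ 2) - 2 * a3 * y * z
         - a5 * y - a6 * x + a7 * z - a10) * D3 1 q x y z
      + (- 2 * a1 * x * z - 2 * a2 * y * z + a3 * (x ^ 2 + y ^ 2 - z ^ 2)
         - a4 * x - a5 * z - a7 * y - a8) * D3 2 q x y z
      - 2 * (a5 + 2 * (a1 * x + a2 * y + a3 * z)) * q x y z = 0) ->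
    is_symmetry_generator q xi eta tau phi psi zeta.
Proof.
  intros HF HQ.
  assert (Exi : xi = fun x y z u v w => a1 * (x ^ 2 - y ^ 2 - z ^ 2) + 2 * a2 * x * y
                       + 2 * a3 * x * z - a4 * z + a5 * x - a6 * y + a9).
  { do 6 (apply functional_extensionality; intro). apply HF. }
  assert (Eeta : eta = fun x y z u v w => 2 * a1 * x * y + a2 * (y ^ 2 - x ^ 2 - z ^ 2)
                       + 2 * a3 * y * z + a5 * y + a6 * x - a7 * z + a10).
  { do 6 (apply functional_extensionality; intro). apply HF. }
  assert (Etau : tau = fun x y z u v w => 2 * a1 * x * z + 2 * a2 * y * z
                       + a3 * (z ^ 2 - x ^ 2 - y ^ 2) + a4 * x + a5 * z
                       + a7 * y + a8).
  { do 6 (apply functional_extensionality; intro). apply HF. }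
  assert (Ephi : phi = fun x y z u v w => a1 * (1 - 2 * (x * u + y * v + z * w))
                       + 2 * a2 * (x * v - y * u) + 2 * a3 * (x * w - z * u)
                       - a4 * w - a5 * u - a6 * v).
  { do 6 (apply functional_extensionality; intro). apply HF. }
  assert (Epsi : psi = fun x y z u v w => 2 * a1 * (y * u - x * v)
                       + a2 * (1 - 2 * (x * u + y * v + z * w))
                       - 2 * a3 * (z * v - y * w) - a5 * v + a6 * u - a7 * w).
  { do 6 (apply functional_extensionality; intro). apply HF. }
  assert (Ezeta : zeta = fun x y z u v w => 2 * a1 * (z * u - x * w) + 2 * a2 * (z * v - y * w)
                       + a3 * (1 - 2 * (x * u + y * v + z * w))
                       + a4 * u - a5 * w + a7 * v).
  { do 6 (apply functional_extensionality; intro). apply HF. }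
  clear HF. subst xi eta tau phi psi zeta.
  intros x y z u v w J H1 H2 H3 H4.
  cbv beta iota zeta delta [prol1 TD sel3].
  repeat compD.
  unfold Eq1, Eq2, Eq3, Eq4 in *.
  assert (J21 : J 2%nat 1%nat = J 1%nat 2%nat) by lra.
  assert (J20 : J 2%nat 0%nat = J 0%nat 2%nat) by lra.
  assert (J10 : J 1%nat 0%nat = J 0%nat 1%nat) by lra.
  assert (Qe : q x y z = u ^ 2 + v ^ 2 + w ^ 2 - (J 0%nat 0%nat + J 1%nat 1%nat + J 2%nat 2%nat)) by lra.
  pose proof (HQ x y z) as HQ1.
  rewrite J21, J20, J10. rewrite Qe in HQ1.
  repeat split; try ring. lra.
Qed.


Lemma pd_opp_sm f k p : smooth_n 6 f -> (k < 6)%nat -> pd k (fun p => - f p) p = - pd k f p.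
Proof. intros Hs Hk. apply is_der_pd. eapply dl_opp. apply (sm_der 6 f k p Hs Hk). reflexivity. Qed.
Lemma pd_plus_sm f g k p : smooth_n 6 f -> smooth_n 6 g -> (k < 6)%nat ->
  pd k (fun p => f p + g p) p = pd k f p + pd k g p.
Proof. intros Hs Hs' Hk. apply is_der_pd. eapply dl_plus. apply (sm_der 6 f k p Hs Hk).
  apply (sm_der 6 g k p Hs' Hk). reflexivity. Qed.

Lemma Dzero_sm F d : smooth_n 6 F -> (d < 6)%nat ->
  (forall x y z u v w, pd d F (pt6 x y z u v w) = 0) -> Dzero F d.
Proof. intros Hs Hd H0 x y z u v w. rewrite <- (H0 x y z u v w). now apply (sm_der 6). Qed.

Lemma ZT F T : smooth_n 6 F ->
  (forall d, (d < 6)%nat -> forall x y z u v w,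
     derivable_pt_lim (fun t => T (upd (pt6 x y z u v w) d t)) (pt6 x y z u v w d) (pd d F (pt6 x y z u v w))) ->
  forall x y z u v w, F (pt6 x y z u v w) = T (pt6 x y z u v w) + (F (pt6 0 0 0 0 0 0) - T (pt6 0 0 0 0 0 0)).
Proof.
  intros Hs HT x y z u v w.
  assert (E : forall x y z u v w, F (pt6 x y z u v w) - T (pt6 x y z u v w)
      = F (pt6 0 0 0 0 0 0) - T (pt6 0 0 0 0 0 0)).
  { apply (ZG (fun p => F p - T p)).
    intros d Hd x' y' z' u' v' w'. eapply dl_minus. apply (sm_der 6 F d _ Hs Hd). apply HT; auto. ring. }
  rewrite <- (E x y z u v w). ring.
Qed.

Section Fwd.
Variables (q : F3) (xi eta tau phi psi zeta : F6).
Hypotheses (Hxi : smooth6 xi) (Heta : smooth6 eta) (Htau : smooth6 tau)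
  (Hphi : smooth6 phi) (Hpsi : smooth6 psi) (Hzeta : smooth6 zeta).
Hypothesis H : is_symmetry_generator q xi eta tau phi psi zeta.

Definition X j := unc6 (sel3 xi eta tau j).
Definition Y k := unc6 (sel3 phi psi zeta k).
Definition nu := pd 0 (X 0).
Definition lam := fun p => pd 3 (Y 0) p + nu p.

Lemma smX j : smooth_n 6 (X j).
Proof. destruct j as [|[|j]]; [exact Hxi|exact Heta|exact Htau]. Qed.
Lemma smY j : smooth_n 6 (Y j).
Proof. destruct j as [|[|j]]; [exact Hphi|exact Hpsi|exact Hzeta]. Qed.
Lemma smXd j k : (k < 6)%nat -> smooth_n 6 (pd k (X j)).
Proof. intro. apply smooth_pd; auto. apply smX. Qed.
Lemma smYd j k : (k < 6)%nat -> smooth_n 6 (pd k (Y j)).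
Proof. intro. apply smooth_pd; auto. apply smY. Qed.
Lemma smnu : smooth_n 6 nu.
Proof. apply smXd; lia. Qed.
Lemma smnud k : (k < 6)%nat -> smooth_n 6 (pd k nu).
Proof. intro. apply smooth_pd; auto. apply smnu. Qed.

Ltac toD6 :=
  unfold lam, nu, X, Y; cbv [sel3 Nat.add];
  repeat match goal with |- context [pd ?k (unc6 ?F) (pt6 ?x ?y ?z ?u ?v ?w)] =>
    change (pd k (unc6 F) (pt6 x y z u v w)) with (D6 k F x y z u v w) end.

Ltac gB x y z u v w := destruct (alg_B q xi eta tau phi psi zeta H x y z u v w) as (?&?&?&?&?&?&?&?&?).
Ltac gL x y z u v w := destruct (alg_L q xi eta tau phi psi zeta H x y z u v w) as (?&?&?&?&?&?&?&?&?&?&?&?&?).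

Lemma G1 j l : (j < 3)%nat -> (l < 3)%nat -> forall x y z u v w, pd (3 + l) (X j) (pt6 x y z u v w) = 0.
Proof. intros Hj Hl x y z u v w. gB x y z u v w.
  destruct j as [|[|[|j]]]; try lia; destruct l as [|[|[|l]]]; try lia; toD6; auto. Qed.

Lemma G2 i j : (i < 3)%nat -> (j < 3)%nat -> i <> j -> forall x y z u v w,
  pd i (X j) (pt6 x y z u v w) = - pd j (X i) (pt6 x y z u v w).
Proof. intros Hi Hj Hij x y z u v w. gL x y z u v w.
  destruct i as [|[|[|i]]]; try lia; destruct j as [|[|[|j]]]; try lia; toD6; lra. Qed.

Lemma G3 i : (i < 3)%nat -> forall x y z u v w, pd i (X i) (pt6 x y z u v w) = nu (pt6 x y z u v w).
Proof. intros Hi x y z u v w. gL x y z u v w.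
  destruct i as [|[|[|i]]]; try lia; toD6; lra. Qed.

Lemma G4 k l : (k < 3)%nat -> (l < 3)%nat -> k <> l -> forall x y z u v w,
  pd (3 + l) (Y k) (pt6 x y z u v w) = - pd k (X l) (pt6 x y z u v w).
Proof. intros Hi Hj Hij x y z u v w. gL x y z u v w.
  destruct k as [|[|[|k]]]; try lia; destruct l as [|[|[|l]]]; try lia; toD6; lra. Qed.

Lemma G5 k : (k < 3)%nat -> forall x y z u v w,
  pd (3 + k) (Y k) (pt6 x y z u v w) = lam (pt6 x y z u v w) - nu (pt6 x y z u v w).
Proof. intros Hk x y z u v w. gL x y z u v w.
  destruct k as [|[|[|k]]]; try lia; toD6; lra. Qed.

Lemma G6 x y z u v w :
  - (X 0 (pt6 x y z u v w) * D3 0 q x y z + X 1 (pt6 x y z u v w) * D3 1 q x y z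
     + X 2 (pt6 x y z u v w) * D3 2 q x y z)
  + 2 * u * Y 0 (pt6 x y z u v w) + 2 * v * Y 1 (pt6 x y z u v w) + 2 * w * Y 2 (pt6 x y z u v w)
  - (pd 0 (Y 0) (pt6 x y z u v w) + pd 1 (Y 1) (pt6 x y z u v w) + pd 2 (Y 2) (pt6 x y z u v w))
  - (u^2+v^2+w^2 - q x y z) * (lam (pt6 x y z u v w) - 2 * nu (pt6 x y z u v w)) = 0.
Proof. pose proof (alg_F5 q xi eta tau phi psi zeta H x y z u v w) as F.
  toD6. unfold X, Y, unc6 in *. simpl sel3. simpl pt6. lra. Qed.


Lemma A_b i j : (i < 3)%nat -> (j < 3)%nat -> i <> j -> forall x y z u v w,
  pd j (pd j (X i)) (pt6 x y z u v w) = - pd i nu (pt6 x y z u v w).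
Proof.
  intros Hi Hj Hij x y z u v w.
  rewrite (congr6 (pd j (X i)) (fun p => - pd i (X j) p) (G2 j i Hj Hi (not_eq_sym Hij)) j ltac:(lia)).
  rewrite pd_opp_sm by (try apply smXd; lia).
  rewrite (clairaut 6 (X j) j i) by (try apply smX; lia).
  rewrite (congr6 (pd j (X j)) nu (G3 j Hj) i ltac:(lia)). reflexivity.
Qed.

Lemma A_c i j k : (i < 3)%nat -> (j < 3)%nat -> (k < 3)%nat -> i <> j -> j <> k -> i <> k ->
  forall x y z u v w, pd k (pd j (X i)) (pt6 x y z u v w) = 0.
Proof.
  intros Hi Hj Hk Hij Hjk Hik x y z u v w.
  assert (E : pd k (pd j (X i)) (pt6 x y z u v w) = - pd k (pd j (X i)) (pt6 x y z u v w)).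
  { rewrite (congr6 (pd j (X i)) (fun p => - pd i (X j) p) (G2 j i Hj Hi (not_eq_sym Hij)) k ltac:(lia)) at 1.
    rewrite pd_opp_sm by (try apply smXd; lia).
    rewrite (clairaut 6 (X j) k i) by (try apply smX; lia).
    rewrite (congr6 (pd k (X j)) (fun p => - pd j (X k) p) (G2 k j Hk Hj (not_eq_sym Hjk)) i ltac:(lia)).
    rewrite pd_opp_sm by (try apply smXd; lia).
    rewrite (clairaut 6 (X k) i j) by (try apply smX; lia).
    rewrite (congr6 (pd i (X k)) (fun p => - pd k (X i) p) (G2 i k Hi Hk Hik) j ltac:(lia)).
    rewrite pd_opp_sm by (try apply smXd; lia).
    rewrite (clairaut 6 (X i) j k) by (try apply smX; lia). ring. }
  lra.
Qed.

Lemma A_a i k : (i < 3)%nat -> (k < 6)%nat -> forall x y z u v w,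
  pd k (pd i (X i)) (pt6 x y z u v w) = pd k nu (pt6 x y z u v w).
Proof. intros Hi Hk x y z u v w. apply (congr6 _ _ (G3 i Hi) k Hk). Qed.

Lemma A_u i j l : (i < 3)%nat -> (j < 6)%nat -> (l < 3)%nat -> forall x y z u v w,
  pd (3 + l) (pd j (X i)) (pt6 x y z u v w) = 0.
Proof.
  intros Hi Hj Hl x y z u v w.
  rewrite (clairaut 6 (X i) (3 + l) j) by (try apply smX; lia).
  rewrite (congr6 (pd (3 + l) (X i)) (fun _ => 0) (G1 i l Hi Hl) j Hj). apply pd_const.
Qed.

Lemma B1 i k : (i < 3)%nat -> (k < 3)%nat -> i <> k -> forall x y z u v w,
  pd k (pd i nu) (pt6 x y z u v w) = 0.
Proof.
  intros Hi Hk Hik x y z u v w. set (j := (3 - i - k)%nat).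
  assert (Hj : (j < 3)%nat) by (unfold j; lia).
  assert (Hij : i <> j) by (unfold j; lia). assert (Hkj : k <> j) by (unfold j; lia).
  assert (E := congr6 (pd j (pd j (X i))) (fun p => - pd i nu p) (A_b i j Hi Hj Hij) k ltac:(lia) x y z u v w).
  rewrite pd_opp_sm in E by (try apply smnud; lia).
  rewrite (clairaut 6 (pd j (X i)) k j) in E by (try apply smXd; lia).
  rewrite (congr6 (pd k (pd j (X i))) (fun _ => 0) (A_c i j k Hi Hj Hk Hij (not_eq_sym Hkj) Hik) j ltac:(lia)) in E.
  rewrite pd_const in E. lra.
Qed.

Lemma B2 i j : (i < 3)%nat -> (j < 3)%nat -> i <> j -> forall x y z u v w,
  pd i (pd i nu) (pt6 x y z u v w) = - pd j (pd j nu) (pt6 x y z u v w).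
Proof.
  intros Hi Hj Hij x y z u v w.
  assert (E := congr6 (pd j (pd j (X i))) (fun p => - pd i nu p) (A_b i j Hi Hj Hij) i ltac:(lia) x y z u v w).
  rewrite pd_opp_sm in E by (try apply smnud; lia).
  rewrite (clairaut 6 (pd j (X i)) i j) in E by (try apply smXd; lia).
  assert (E2 : forall x y z u v w, pd i (pd j (X i)) (pt6 x y z u v w) = pd j nu (pt6 x y z u v w)).
  { intros. rewrite (clairaut 6 (X i) i j) by (try apply smX; lia). apply A_a; lia. }
  rewrite (congr6 (pd i (pd j (X i))) (pd j nu) E2 j ltac:(lia)) in E. lra.
Qed.

Lemma B3 i : (i < 3)%nat -> forall x y z u v w, pd i (pd i nu) (pt6 x y z u v w) = 0.
Proof.
  intros Hi x y z u v w.
  pose proof (B2 0 1 ltac:(lia) ltac:(lia) ltac:(lia) x y z u v w).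
  pose proof (B2 0 2 ltac:(lia) ltac:(lia) ltac:(lia) x y z u v w).
  pose proof (B2 1 2 ltac:(lia) ltac:(lia) ltac:(lia) x y z u v w).
  destruct i as [|[|[|i]]]; try lia; simpl; lra.
Qed.

Lemma B4 l : (l < 3)%nat -> forall x y z u v w, pd (3 + l) nu (pt6 x y z u v w) = 0.
Proof. intros Hl x y z u v w. unfold nu. apply A_u; lia. Qed.

Lemma B5 i l : (i < 3)%nat -> (l < 3)%nat -> forall x y z u v w, pd (3 + l) (pd i nu) (pt6 x y z u v w) = 0.
Proof.
  intros Hi Hl x y z u v w.
  rewrite (clairaut 6 nu (3 + l) i) by (try apply smnu; lia).
  rewrite (congr6 (pd (3 + l) nu) (fun _ => 0) (B4 l Hl) i ltac:(lia)). apply pd_const.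
Qed.

Definition c k := pd k nu (pt6 0 0 0 0 0 0).

Lemma C1 k : (k < 3)%nat -> forall x y z u v w, pd k nu (pt6 x y z u v w) = c k.
Proof.
  intros Hk x y z u v w. unfold c. apply ZG. intros d Hd.
  apply Dzero_sm; auto. apply smnud; lia.
  intros. destruct (Compare_dec.lt_dec d 3).
  - destruct (Nat.eq_dec d k). subst. apply B3; auto. apply B1; auto.
  - replace d with (3 + (d - 3))%nat by lia. apply B5; lia.
Qed.

Lemma SD i j k : (i < 3)%nat -> (j < 3)%nat -> (k < 3)%nat -> forall x y z u v w,
  pd k (pd j (X i)) (pt6 x y z u v w) =
  (if Nat.eqb i j then c k else 0) + (if Nat.eqb i k then c j else 0) - (if Nat.eqb j k then c i else 0).
Proof.
  intros Hi Hj Hk x y z u v w.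
  destruct (Nat.eq_dec i j) as [<-|Hij].
  - rewrite Nat.eqb_refl. rewrite A_a, C1 by lia.
    destruct (Nat.eqb i k); ring.
  - rewrite (proj2 (Nat.eqb_neq _ _) Hij).
    destruct (Nat.eq_dec i k) as [<-|Hik].
    + rewrite Nat.eqb_refl. rewrite (proj2 (Nat.eqb_neq _ _) (not_eq_sym Hij)).
      rewrite (clairaut 6 (X i) i j) by (try apply smX; lia). rewrite A_a, C1 by lia. ring.
    + rewrite (proj2 (Nat.eqb_neq _ _) Hik).
      destruct (Nat.eq_dec j k) as [<-|Hjk].
      * rewrite Nat.eqb_refl, A_b, C1 by lia. ring.
      * rewrite (proj2 (Nat.eqb_neq _ _) Hjk), A_c by lia. ring.
Qed.


Lemma A_u' i j d : (i < 3)%nat -> (j < 6)%nat -> (3 <= d < 6)%nat -> forall x y z u v w,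
  pd d (pd j (X i)) (pt6 x y z u v w) = 0.
Proof. intros. replace d with (3 + (d - 3))%nat by lia. apply A_u; lia. Qed.

Definition P0 := pt6 0 0 0 0 0 0.
Definition a1 := c 0 / 2.
Definition a2 := c 1 / 2.
Definition a3 := c 2 / 2.
Definition a5 := nu P0.
Definition a9 := X 0 P0.
Definition a10 := X 1 P0.
Definition a8 := X 2 P0.
Definition a6 := pd 0 (X 1) P0.
Definition a4 := pd 0 (X 2) P0.
Definition a7 := pd 1 (X 2) P0.

Definition TDx (i j : nat) (p : nat -> R) : R :=
  let x := p 0%nat in let y := p 1%nat in let z := p 2%nat in
  match i, j with
  | 0, 0 => 2*a1*x + 2*a2*y + 2*a3*z + a5
  | 0, 1 => -2*a1*y + 2*a2*x - a6
  | 0, _ => -2*a1*z + 2*a3*x - a4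
  | 1, 0 => 2*a1*y - 2*a2*x + a6
  | 1, 1 => 2*a1*x + 2*a2*y + 2*a3*z + a5
  | 1, _ => -2*a2*z + 2*a3*y - a7
  | _, 0 => 2*a1*z - 2*a3*x + a4
  | _, 1 => 2*a2*z - 2*a3*y + a7
  | _, _ => 2*a1*x + 2*a2*y + 2*a3*z + a5
  end.

Ltac dtac :=
  cbv beta iota zeta delta [upd pt6 Nat.eqb TDx]; apply is_derive_Reals; auto_derive;
  [exact I| unfold a1, a2, a3; lra].

Lemma DX i j : (i < 3)%nat -> (j < 3)%nat -> forall x y z u v w,
  pd j (X i) (pt6 x y z u v w) = TDx i j (pt6 x y z u v w).
Proof.
  intros Hi Hj x y z u v w.
  rewrite (ZT (pd j (X i)) (TDx i j) (smXd i j ltac:(lia))).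
  2:{ intros d Hd x' y' z' u' v' w'.
      destruct (Compare_dec.lt_dec d 3).
      - rewrite SD by lia.
        destruct i as [|[|[|i]]]; try lia; destruct j as [|[|[|j]]]; try lia;
        destruct d as [|[|[|d]]]; try lia; dtac.
      - rewrite A_u' by lia.
        destruct i as [|[|[|i]]]; try lia; destruct j as [|[|[|j]]]; try lia;
        destruct d as [|[|[|[|[|[|d]]]]]]; try lia; dtac. }
  fold P0.
  assert (E: pd j (X i) P0 = TDx i j P0).
  { destruct i as [|[|[|i]]]; try lia; destruct j as [|[|[|j]]]; try lia;
    cbv beta iota zeta delta [TDx]; unfold a5, a6, a4, a7, P0; cbn [pt6];
    try rewrite G3 by lia; try rewrite (G2 0 1) by lia; try rewrite (G2 0 2) by lia;
    try rewrite (G2 1 2) by lia; try ring. }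
  rewrite E. ring.
Qed.


Definition TX (i : nat) (p : nat -> R) : R :=
  let x := p 0%nat in let y := p 1%nat in let z := p 2%nat in
  match i with
  | 0 => a1 * (x ^ 2 - y ^ 2 - z ^ 2) + 2 * a2 * x * y + 2 * a3 * x * z - a4 * z + a5 * x - a6 * y + a9
  | 1 => 2 * a1 * x * y + a2 * (y ^ 2 - x ^ 2 - z ^ 2) + 2 * a3 * y * z + a5 * y + a6 * x - a7 * z + a10
  | _ => 2 * a1 * x * z + 2 * a2 * y * z + a3 * (z ^ 2 - x ^ 2 - y ^ 2) + a4 * x + a5 * z + a7 * y + a8
  end.

Lemma G1' j d : (j < 3)%nat -> (3 <= d < 6)%nat -> forall x y z u v w, pd d (X j) (pt6 x y z u v w) = 0.
Proof. intros. replace d with (3 + (d - 3))%nat by lia. apply G1; lia. Qed.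

Ltac dtac2 :=
  cbv beta iota zeta delta [upd pt6 Nat.eqb TDx TX]; apply is_derive_Reals; auto_derive;
  [exact I| lra].

Lemma XF i : (i < 3)%nat -> forall x y z u v w, X i (pt6 x y z u v w) = TX i (pt6 x y z u v w).
Proof.
  intros Hi x y z u v w.
  rewrite (ZT (X i) (TX i) (smX i)).
  2:{ intros d Hd x' y' z' u' v' w'.
      destruct (Compare_dec.lt_dec d 3).
      - rewrite DX by lia.
        destruct i as [|[|[|i]]]; try lia; destruct d as [|[|[|d]]]; try lia; dtac2.
      - rewrite G1' by lia.
        destruct i as [|[|[|i]]]; try lia; destruct d as [|[|[|[|[|[|d]]]]]]; try lia; dtac2. }
  fold P0.
  assert (E: X i P0 = TX i P0).
  { destruct i as [|[|[|i]]]; try lia;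
    cbv beta iota zeta delta [TX]; unfold a9, a10, a8, P0; cbn [pt6]; ring. }
  rewrite E. ring.
Qed.

Definition Lm := pd 3 (Y 0).
Lemma smLm : smooth_n 6 Lm.
Proof. apply smYd; lia. Qed.

Lemma G5' k : (k < 3)%nat -> forall x y z u v w,
  pd (3 + k) (Y k) (pt6 x y z u v w) = Lm (pt6 x y z u v w).
Proof. intros Hk x y z u v w. rewrite G5 by lia. unfold Lm, lam. ring. Qed.

Lemma D1 m : (m < 3)%nat -> forall x y z u v w, pd (3 + m) Lm (pt6 x y z u v w) = 0.
Proof.
  intros Hm x y z u v w.
  destruct (Nat.eq_dec m 0) as [->|Hm0].
  - assert (E : forall x y z u v w, Lm (pt6 x y z u v w) = pd 4 (Y 1) (pt6 x y z u v w)).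
    { intros. symmetry. apply (G5' 1); lia. }
    rewrite (congr6 Lm (pd 4 (Y 1)) E 3 ltac:(lia)).
    rewrite (clairaut 6 (Y 1) 3 4) by (try apply smY; lia).
    rewrite (congr6 (pd 3 (Y 1)) (fun p => - pd 1 (X 0) p) (G4 1 0 ltac:(lia) ltac:(lia) ltac:(lia)) 4 ltac:(lia)).
    rewrite pd_opp_sm by (try apply smXd; lia).
    rewrite (A_u' 0 1 4) by lia. ring.
  - unfold Lm. rewrite (clairaut 6 (Y 0) (3 + m) 3) by (try apply smY; lia).
    rewrite (congr6 (pd (3 + m) (Y 0)) (fun p => - pd 0 (X m) p) (G4 0 m ltac:(lia) Hm ltac:(lia)) 3 ltac:(lia)).
    rewrite pd_opp_sm by (try apply smXd; lia).
    rewrite (A_u' m 0 3) by lia. ring.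
Qed.

Definition h k l := pd (3 + l) (Y k).
Lemma smh k l : (l < 3)%nat -> smooth_n 6 (h k l).
Proof. intro. apply smYd; lia. Qed.

Lemma D3a k l m : (k < 3)%nat -> (l < 3)%nat -> (m < 3)%nat -> forall x y z u v w,
  pd (3 + m) (h k l) (pt6 x y z u v w) = 0.
Proof.
  intros Hk Hl Hm x y z u v w. unfold h.
  destruct (Nat.eq_dec k l) as [<-|Hkl].
  - rewrite (congr6 _ Lm (G5' k Hk) (3 + m) ltac:(lia)). apply D1; auto.
  - rewrite (congr6 _ (fun p => - pd k (X l) p) (G4 k l Hk Hl Hkl) (3 + m) ltac:(lia)).
    rewrite pd_opp_sm by (try apply smXd; lia).
    rewrite (A_u l k m) by lia. ring.
Qed.


Definition HH k := fun p : nat -> R => Y k p - (p 3%nat * h k 0 p + p 4%nat * h k 1 p + p 5%nat * h k 2 p).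

Lemma HH_dl k d p l : (k < 3)%nat -> (d < 6)%nat ->
  l = pd d (Y k) p - ((if Nat.eqb 3 d then 1 else 0) * h k 0 p + p 3%nat * pd d (h k 0) p
     + ((if Nat.eqb 4 d then 1 else 0) * h k 1 p + p 4%nat * pd d (h k 1) p)
     + ((if Nat.eqb 5 d then 1 else 0) * h k 2 p + p 5%nat * pd d (h k 2) p)) ->
  derivable_pt_lim (fun t => HH k (upd p d t)) (p d) l.
Proof.
  intros Hk Hd El. unfold HH.
  eapply dl_minus. apply (sm_der 6); auto. apply smY.
  eapply dl_plus. eapply dl_plus.
  eapply dl_mult. apply dl_coord. apply (sm_der 6); auto. apply smh; lia. reflexivity.
  eapply dl_mult. apply dl_coord. apply (sm_der 6); auto. apply smh; lia. reflexivity. reflexivity.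
  eapply dl_mult. apply dl_coord. apply (sm_der 6); auto. apply smh; lia. reflexivity. reflexivity.
  rewrite El, !upd_id. ring.
Qed.

Lemma D3b k m : (k < 3)%nat -> (m < 3)%nat -> Dzero (HH k) (3 + m).
Proof.
  intros Hk Hm x y z u v w. apply HH_dl; try lia.
  rewrite !D3a by lia. change (pd (3 + m) (Y k)) with (h k m).
  destruct m as [|[|[|m]]]; try lia; cbn [Nat.eqb Nat.add]; ring.
Qed.

Lemma E_dH k x y z u v w : (k < 3)%nat ->
  pd k (Y k) (pt6 x y z u v w) = pd k (HH k) (pt6 x y z u v w)
    + u * pd k (h k 0) (pt6 x y z u v w) + v * pd k (h k 1) (pt6 x y z u v w)
    + w * pd k (h k 2) (pt6 x y z u v w).
Proof.
  intro Hk. rewrite (is_der_pd _ _ _ _ (HH_dl k k _ _ Hk ltac:(lia) eq_refl)).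
  destruct k as [|[|[|k]]]; try lia; cbn [Nat.eqb pt6]; ring.
Qed.

Lemma uiHH k : (k < 3)%nat -> forall x y z u v w, HH k (pt6 x y z u v w) = HH k (pt6 x y z 0 0 0).
Proof. intro Hk. apply ZGu; [apply (D3b k 0)|apply (D3b k 1)|apply (D3b k 2)]; lia. Qed.

Lemma uih k l : (k < 3)%nat -> (l < 3)%nat -> forall x y z u v w, h k l (pt6 x y z u v w) = h k l (pt6 x y z 0 0 0).
Proof. intros Hk Hl. apply ZGu; apply Dzero_sm; try lia; try (apply smh; lia);
  intros; [apply (D3a k l 0)|apply (D3a k l 1)|apply (D3a k l 2)]; lia. Qed.

Lemma uiLm : forall x y z u v w, Lm (pt6 x y z u v w) = Lm (pt6 x y z 0 0 0).
Proof. apply ZGu; apply Dzero_sm; try lia; try apply smLm;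
  intros; [apply (D1 0)|apply (D1 1)|apply (D1 2)]; lia. Qed.

Lemma uinu : forall x y z u v w, nu (pt6 x y z u v w) = nu (pt6 x y z 0 0 0).
Proof. apply ZGu; apply Dzero_sm; try lia; try apply smnu;
  intros; [apply (B4 0)|apply (B4 1)|apply (B4 2)]; lia. Qed.

Lemma uiX j : (j < 3)%nat -> forall x y z u v w, X j (pt6 x y z u v w) = X j (pt6 x y z 0 0 0).
Proof. intros Hj x y z u v w. rewrite !XF by auto. reflexivity. Qed.

Lemma uidHH k : (k < 3)%nat -> forall x y z u v w,
  pd k (HH k) (pt6 x y z u v w) = pd k (HH k) (pt6 x y z 0 0 0).
Proof. intros Hk. apply pdu_indep; auto. apply uiHH; auto. Qed.

Lemma uidh k l : (k < 3)%nat -> (l < 3)%nat -> forall x y z u v w,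
  pd k (h k l) (pt6 x y z u v w) = pd k (h k l) (pt6 x y z 0 0 0).
Proof. intros Hk Hl. apply pdu_indep; auto. apply uih; auto. Qed.


Lemma Ydec k x y z u v w : Y k (pt6 x y z u v w) = HH k (pt6 x y z u v w)
  + u * h k 0 (pt6 x y z u v w) + v * h k 1 (pt6 x y z u v w) + w * h k 2 (pt6 x y z u v w).
Proof. unfold HH. cbn [pt6]. ring. Qed.

Lemma Poly x y z u v w : let Pb := pt6 x y z 0 0 0 in
  - (X 0 Pb * D3 0 q x y z + X 1 Pb * D3 1 q x y z + X 2 Pb * D3 2 q x y z)
  + 2 * u * (HH 0 Pb + u * h 0 0 Pb + v * h 0 1 Pb + w * h 0 2 Pb) + 2 * v * (HH 1 Pb + u * h 1 0 Pb + v * h 1 1 Pb + w * h 1 2 Pb) + 2 * w * (HH 2 Pb + u * h 2 0 Pb + v * h 2 1 Pb + w * h 2 2 Pb)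
  - ((pd 0 (HH 0) Pb + u * pd 0 (h 0 0) Pb + v * pd 0 (h 0 1) Pb + w * pd 0 (h 0 2) Pb) + (pd 1 (HH 1) Pb + u * pd 1 (h 1 0) Pb + v * pd 1 (h 1 1) Pb + w * pd 1 (h 1 2) Pb) + (pd 2 (HH 2) Pb + u * pd 2 (h 2 0) Pb + v * pd 2 (h 2 1) Pb + w * pd 2 (h 2 2) Pb))
  - (u^2+v^2+w^2 - q x y z) * (Lm Pb - nu Pb) = 0.
Proof.
  intro Pb. pose proof (G6 x y z u v w) as E.
  rewrite (Ydec 0), (Ydec 1), (Ydec 2) in E.
  rewrite (E_dH 0), (E_dH 1), (E_dH 2) in E by lia.
  assert (El : lam (pt6 x y z u v w) = Lm (pt6 x y z u v w) + nu (pt6 x y z u v w)) by reflexivity.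
  rewrite El in E.
  rewrite (uiX 0 ltac:(lia) x y z u v w),
    (uiX 1 ltac:(lia) x y z u v w),
    (uiX 2 ltac:(lia) x y z u v w),
    (uiHH 0 ltac:(lia) x y z u v w),
    (uiHH 1 ltac:(lia) x y z u v w),
    (uiHH 2 ltac:(lia) x y z u v w),
    (uih 0 0 ltac:(lia) ltac:(lia) x y z u v w),
    (uih 0 1 ltac:(lia) ltac:(lia) x y z u v w),
    (uih 0 2 ltac:(lia) ltac:(lia) x y z u v w),
    (uih 1 0 ltac:(lia) ltac:(lia) x y z u v w),
    (uih 1 1 ltac:(lia) ltac:(lia) x y z u v w),
    (uih 1 2 ltac:(lia) ltac:(lia) x y z u v w),
    (uih 2 0 ltac:(lia) ltac:(lia) x y z u v w),
    (uih 2 1 ltac:(lia) ltac:(lia) x y z u v w),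
    (uih 2 2 ltac:(lia) ltac:(lia) x y z u v w),
    (uidHH 0 ltac:(lia) x y z u v w),
    (uidHH 1 ltac:(lia) x y z u v w),
    (uidHH 2 ltac:(lia) x y z u v w),
    (uidh 0 0 ltac:(lia) ltac:(lia) x y z u v w),
    (uidh 0 1 ltac:(lia) ltac:(lia) x y z u v w),
    (uidh 0 2 ltac:(lia) ltac:(lia) x y z u v w),
    (uidh 1 0 ltac:(lia) ltac:(lia) x y z u v w),
    (uidh 1 1 ltac:(lia) ltac:(lia) x y z u v w),
    (uidh 1 2 ltac:(lia) ltac:(lia) x y z u v w),
    (uidh 2 0 ltac:(lia) ltac:(lia) x y z u v w),
    (uidh 2 1 ltac:(lia) ltac:(lia) x y z u v w),
    (uidh 2 2 ltac:(lia) ltac:(lia) x y z u v w),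
    (uiLm x y z u v w),
    (uinu x y z u v w) in E.
  unfold Pb. lra.
Qed.


Lemma LmN x y z : Lm (pt6 x y z 0 0 0) = - nu (pt6 x y z 0 0 0).
Proof.
  pose proof (Poly x y z 1 0 0) as E1. pose proof (Poly x y z (-1) 0 0) as E2.
  pose proof (Poly x y z 0 0 0) as E3. cbv zeta in E1, E2, E3.
  pose proof (G5' 0 ltac:(lia) x y z 0 0 0) as E4. change (pd (3 + 0) (Y 0)) with (h 0 0) in E4.
  lra.
Qed.

Lemma LmN' x y z u v w : Lm (pt6 x y z u v w) = - nu (pt6 x y z u v w).
Proof. rewrite uiLm, uinu. apply LmN. Qed.

Lemma hval k l : (k < 3)%nat -> (l < 3)%nat -> forall x y z u v w,
  h k l (pt6 x y z u v w) = - pd k (X l) (pt6 x y z u v w).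
Proof.
  intros Hk Hl x y z u v w. unfold h.
  destruct (Nat.eq_dec k l) as [<-|Hkl].
  - rewrite G5', LmN', G3 by lia. reflexivity.
  - apply G4; auto.
Qed.

Lemma dhval k l : (k < 3)%nat -> (l < 3)%nat -> forall x y z u v w,
  pd k (h k l) (pt6 x y z u v w) = - pd k (pd k (X l)) (pt6 x y z u v w).
Proof.
  intros Hk Hl x y z u v w.
  rewrite (congr6 (h k l) (fun p => - pd k (X l) p) (hval k l Hk Hl) k ltac:(lia)).
  apply pd_opp_sm. apply smXd; lia. lia.
Qed.

Lemma HHval m : (m < 3)%nat -> forall x y z u v w, HH m (pt6 x y z u v w) = c m / 2.
Proof.
  intros Hm x y z u v w. rewrite uiHH by auto.
  pose proof (Poly x y z 1 0 0) as E1. pose proof (Poly x y z (-1) 0 0) as E2.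
  pose proof (Poly x y z 0 1 0) as E3. pose proof (Poly x y z 0 (-1) 0) as E4.
  pose proof (Poly x y z 0 0 1) as E5. pose proof (Poly x y z 0 0 (-1)) as E6.
  cbv zeta in E1, E2, E3, E4, E5, E6.
  rewrite !dhval in E1, E2, E3, E4, E5, E6 by lia.
  rewrite !SD in E1, E2, E3, E4, E5, E6 by lia.
  cbn [Nat.eqb] in E1, E2, E3, E4, E5, E6.
  destruct m as [|[|[|m]]]; try lia; lra.
Qed.

Lemma Qcond x y z : let Pb := pt6 x y z 0 0 0 in
  - (X 0 Pb * D3 0 q x y z + X 1 Pb * D3 1 q x y z + X 2 Pb * D3 2 q x y z)
  - 2 * nu Pb * q x y z = 0.
Proof.
  intro Pb. pose proof (Poly x y z 0 0 0) as E. cbv zeta in E.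
  assert (Ed : forall k, (k < 3)%nat -> pd k (HH k) (pt6 x y z 0 0 0) = 0).
  { intros k Hk.
    rewrite (congr6 (HH k) (fun _ => c k / 2) (HHval k Hk) k ltac:(lia)). apply pd_const. }
  rewrite (Ed 0%nat), (Ed 1%nat), (Ed 2%nat) in E by lia.
  repeat rewrite LmN in E. unfold Pb. lra.
Qed.

Lemma Yform k : (k < 3)%nat -> forall x y z u v w,
  Y k (pt6 x y z u v w) = c k / 2 - (u * pd k (X 0) (pt6 x y z u v w)
     + v * pd k (X 1) (pt6 x y z u v w) + w * pd k (X 2) (pt6 x y z u v w)).
Proof.
  intros Hk x y z u v w. rewrite Ydec, HHval, !hval by lia. ring.
Qed.


Lemma forward_main : exists a1 a2 a3 a4 a5 a6 a7 a8 a9 a10 : R,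
    (forall x y z u v w : R,
      xi x y z u v w = a1 * (x ^ 2 - y ^ 2 - z ^ 2) + 2 * a2 * x * y
                       + 2 * a3 * x * z - a4 * z + a5 * x - a6 * y + a9
      /\ eta x y z u v w = 2 * a1 * x * y + a2 * (y ^ 2 - x ^ 2 - z ^ 2)
                       + 2 * a3 * y * z + a5 * y + a6 * x - a7 * z + a10
      /\ tau x y z u v w = 2 * a1 * x * z + 2 * a2 * y * z
                       + a3 * (z ^ 2 - x ^ 2 - y ^ 2) + a4 * x + a5 * z
                       + a7 * y + a8
      /\ phi x y z u v w = a1 * (1 - 2 * (x * u + y * v + z * w))
                       + 2 * a2 * (x * v - y * u) + 2 * a3 * (x * w - z * u)
                       - a4 * w - a5 * u - a6 * v
      /\ psi x y z u v w = 2 * a1 * (y * u - x * v)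
                       + a2 * (1 - 2 * (x * u + y * v + z * w))
                       - 2 * a3 * (z * v - y * w) - a5 * v + a6 * u - a7 * w
      /\ zeta x y z u v w = 2 * a1 * (z * u - x * w) + 2 * a2 * (z * v - y * w)
                       + a3 * (1 - 2 * (x * u + y * v + z * w))
                       + a4 * u - a5 * w + a7 * v)
    /\
    (forall x y z : R,
      (a1 * (y ^ 2 + z ^ 2 - x ^ 2) - 2 * a2 * x * y - 2 * a3 * x * z
         + a4 * z - a5 * x + a6 * y - a9) * D3 0 q x y z
      + (- 2 * a1 * x * y + a2 * (x ^ 2 + z ^ 2 - y ^ 2) - 2 * a3 * y * z
         - a5 * y - a6 * x + a7 * z - a10) * D3 1 q x y z
      + (- 2 * a1 * x * z - 2 * a2 * y * z + a3 * (x ^ 2 + y ^ 2 - z ^ 2)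
         - a4 * x - a5 * z - a7 * y - a8) * D3 2 q x y z
      - 2 * (a5 + 2 * (a1 * x + a2 * y + a3 * z)) * q x y z = 0).
Proof.
  exists a1, a2, a3, a4, a5, a6, a7, a8, a9, a10. split.
  - intros x y z u v w.
    change (xi x y z u v w) with (X 0 (pt6 x y z u v w)).
    change (eta x y z u v w) with (X 1 (pt6 x y z u v w)).
    change (tau x y z u v w) with (X 2 (pt6 x y z u v w)).
    change (phi x y z u v w) with (Y 0 (pt6 x y z u v w)).
    change (psi x y z u v w) with (Y 1 (pt6 x y z u v w)).
    change (zeta x y z u v w) with (Y 2 (pt6 x y z u v w)).
    rewrite !XF by lia. rewrite !Yform by lia. rewrite !DX by lia.
    cbv beta iota zeta delta [TX TDx]. cbn [pt6].
    assert (c 0 / 2 = a1) by reflexivity. assert (c 1 / 2 = a2) by reflexivity.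
    assert (c 2 / 2 = a3) by reflexivity.
    repeat split; lra.
  - intros x y z. pose proof (Qcond x y z) as E. cbv zeta in E.
    rewrite !XF in E by lia.
    change nu with (pd 0 (X 0)) in E. rewrite DX in E by lia.
    cbv beta iota zeta delta [TX TDx] in E. cbn [pt6] in E. lra.
Qed.

End Fwd.

Theorem mainTheorem5 (q : F3) (xi eta tau phi psi zeta : F6)
  (Hq : smooth3 q)
  (Hxi : smooth6 xi) (Heta : smooth6 eta) (Htau : smooth6 tau)
  (Hphi : smooth6 phi) (Hpsi : smooth6 psi) (Hzeta : smooth6 zeta) :
  is_symmetry_generator q xi eta tau phi psi zeta <->
  exists a1 a2 a3 a4 a5 a6 a7 a8 a9 a10 : R,
    (forall x y z u v w : R,
      xi x y z u v w = a1 * (x ^ 2 - y ^ 2 - z ^ 2) + 2 * a2 * x * y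
                       + 2 * a3 * x * z - a4 * z + a5 * x - a6 * y + a9
      /\ eta x y z u v w = 2 * a1 * x * y + a2 * (y ^ 2 - x ^ 2 - z ^ 2)
                       + 2 * a3 * y * z + a5 * y + a6 * x - a7 * z + a10
      /\ tau x y z u v w = 2 * a1 * x * z + 2 * a2 * y * z
                       + a3 * (z ^ 2 - x ^ 2 - y ^ 2) + a4 * x + a5 * z
                       + a7 * y + a8
      /\ phi x y z u v w = a1 * (1 - 2 * (x * u + y * v + z * w))
                       + 2 * a2 * (x * v - y * u) + 2 * a3 * (x * w - z * u)
                       - a4 * w - a5 * u - a6 * v
      /\ psi x y z u v w = 2 * a1 * (y * u - x * v)
                       + a2 * (1 - 2 * (x * u + y * v + z * w))
                       - 2 * a3 * (z * v - y * w) - a5 * v + a6 * u - a7 * w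
      /\ zeta x y z u v w = 2 * a1 * (z * u - x * w) + 2 * a2 * (z * v - y * w)
                       + a3 * (1 - 2 * (x * u + y * v + z * w))
                       + a4 * u - a5 * w + a7 * v)
    /\
    (forall x y z : R,
      (a1 * (y ^ 2 + z ^ 2 - x ^ 2) - 2 * a2 * x * y - 2 * a3 * x * z
         + a4 * z - a5 * x + a6 * y - a9) * D3 0 q x y z
      + (- 2 * a1 * x * y + a2 * (x ^ 2 + z ^ 2 - y ^ 2) - 2 * a3 * y * z
         - a5 * y - a6 * x + a7 * z - a10) * D3 1 q x y z
      + (- 2 * a1 * x * z - 2 * a2 * y * z + a3 * (x ^ 2 + y ^ 2 - z ^ 2)
         - a4 * x - a5 * z - a7 * y - a8) * D3 2 q x y z
      - 2 * (a5 + 2 * (a1 * x + a2 * y + a3 * z)) * q x y z = 0).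
Proof.
  split.
  - intro H. now apply forward_main.
  - intros (a1&a2&a3&a4&a5&a6&a7&a8&a9&a10&HF&HQ).
    exact (backward q xi eta tau phi psi zeta a1 a2 a3 a4 a5 a6 a7 a8 a9 a10 HF HQ).
Qed.
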